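(* Let $G$ be a connected signed digraph. There exists a nilpotent degree-bounded finite dynamical system on $G$ if and only if $G$ is not a signed cycle.
   Context: A finite dynamical system (FDS) with $n$ components is a map $f=(f_1,\dots,f_n):X\to X$ where $X=X_1\times\cdots\times X_n$ and each $X_i$ is a nonempty finite interval of integers; $f^k$ denotes the $k$-fold composition. $f$ is nilpotent if $f^k$ is a constant map for some positive integer $k$. A signed digraph is a pair $G=(V,E)$ with $E\subseteq V\times V\times\{+,-\}$; $(j,i,s)\in E$ is an arc from $j$ to $i$ of sign $s$ (loops allowed; $G$ may have both a positive and a negative arc from $j$ to $i$, called parallel arcs). Write $G^+_i=\{j:(j,i,+)\in E\}$, $G^-_i=\{j:(j,i,-)\in E\}$, $G_i=G^+_i\cup G^-_i$. The in-degree is $d^{\mathrm{in}}_G(i)=|G^+_i|+|G^-_i|$ and the out-degree $d^{\mathrm{out}}_G(i)$ is the number of positive arcs leaving $i$ plus the number of negative arcs leaving $i$. $G$ is connected if its underlying undirected graph is connected. The underlying unsigned digraph $|G|$ has vertex set $V$ and an arc from $j$ to $i$ iff $j\in G_i$. $G$ is a signed cycle if $|G|$ is a directed cycle (through all vertices, each exactly once; a single vertex with a loop counts) and $G$ has no parallel arcs. The interaction graph of an FDS $f$ is the signed digraph on $\{1,\dots,n\}$ with a positive (resp. negative) arc from $j$ to $i$ iff there is $x\in X$ with $x_j<\max(X_j)$ such that $f_i(x+e_j)-f_i(x)$ is positive (resp. negative), $e_j$ the $j$-th unit vector. $f$ is an FDS on $G$ if $G$ is its interaction graph. $f$ is degree-bounded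 if, with $G$ its interaction graph, for every $i$: $|X_i|=2$ if $d^{\mathrm{out}}_G(i)=0<d^{\mathrm{in}}_G(i)$, and $|X_i|\le d^{\mathrm{out}}_G(i)+1$ otherwise. *)

(* Defs.v *)
From mathcomp Require Import all_boot all_order all_algebra.
Set Implicit Arguments. Unset Strict Implicit. Unset Printing Implicit Defensive.
Import Order.TTheory GRing.Theory Num.Theory.
Local Open Scope ring_scope.

(* A signed digraph on the vertex set 'I_n (= {1,...,n} shifted to {0,...,n-1}).
   [pos G j i] : there is a positive arc from j to i;
   [neg G j i] : there is a negative arc from j to i.
   Loops and parallel arcs (pos and neg both) are allowed. *)
Record sdigraph (n : nat) := SDigraph { pos : rel 'I_n; neg : rel 'I_n }.

Section Graphs.
Variable n : nat.
Implicit Types G : sdigraph n.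

Definition uarc G : rel 'I_n := fun j i => pos G j i || neg G j i.

Definition indeg G (i : 'I_n) : nat :=
  (#|[set j | pos G j i]| + #|[set j | neg G j i]|)%N.
Definition outdeg G (j : 'I_n) : nat :=
  (#|[set i | pos G j i]| + #|[set i | neg G j i]|)%N.

Definition sconnected G : Prop :=
  forall u v : 'I_n, connect (fun a b => uarc G a b || uarc G b a) u v.

Definition signed_cycle G : Prop :=
  (exists s : seq 'I_n,
     [/\ s != [::], perm_eq s (enum 'I_n) &
         forall j i, uarc G j i = (i == next s j)])
  /\ (forall j i, ~~ (pos G j i && neg G j i)).
End Graphs.

Section FDS.
Variable n : nat.
(* X_i = [lo i, hi i] (integers); states are maps 'I_n -> int. *)
Variables lo hi : 'I_n -> int.

Definition inX (x : 'I_n -> int) : Prop := forall i, lo i <= x i <= hi i.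

Definition incr (x : 'I_n -> int) (j : 'I_n) : 'I_n -> int :=
  fun k => if k == j then x k + 1 else x k.

Variable f : ('I_n -> int) -> ('I_n -> int).

Definition maps_X : Prop := forall x, inX x -> inX (f x).

(* f is an FDS on G : G is its interaction graph *)
Definition fds_on (G : sdigraph n) : Prop :=
  forall j i : 'I_n,
    (pos G j i <-> exists x, [/\ inX x, x j < hi j & f (incr x j) i - f x i > 0])
 /\ (neg G j i <-> exists x, [/\ inX x, x j < hi j & f (incr x j) i - f x i < 0]).

Definition nilpotent : Prop :=
  exists k : nat, (0 < k)%N /\
    exists c : 'I_n -> int, forall x, inX x -> forall i, iter k f x i = c i.

Definition card_X (i : 'I_n) : int := hi i - lo i + 1.

Definition degree_bounded (G : sdigraph n) : Prop :=
  forall i : 'I_n,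
    if (outdeg G i == 0%N) && (0 < indeg G i)%N then card_X i = 2
    else card_X i <= (outdeg G i).+1%:Z.
End FDS.

(* Main.v *)
Require Import Defs.
From mathcomp Require Import all_boot all_order all_algebra zify.
From Stdlib Require Import FunctionalExtensionality.
Import Order.TTheory GRing.Theory Num.Theory.
Set Implicit Arguments. Unset Strict Implicit. Unset Printing Implicit Defensive.

Section Deg.
Variable n : nat.
Variable G : sdigraph n.

Lemma card_set_ge1 (P : pred 'I_n) u : P u -> (1 <= #|[set i | P i]|)%N.
Proof.
move=> Pu; rewrite -(cards1 u); apply: subset_leq_card.
by apply/subsetP=> x; rewrite in_set1 inE => /eqP ->.
Qed.

Lemma card_set_ge2 (P : pred 'I_n) u v : P u -> P v -> u != v ->
  (2 <= #|[set i | P i]|)%N.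
Proof.
move=> Pu Pv uv; have <- : #|[set u; v]| = 2%N by rewrite cards2 uv.
apply: subset_leq_card; apply/subsetP=> x; rewrite !inE.
by case/orP=> /eqP ->.
Qed.


Arguments card_set_ge1 P [u].
Arguments card_set_ge2 P [u v].

Lemma uarc_outdeg j i : uarc G j i -> (0 < outdeg G j)%N.
Proof.
rewrite /uarc /outdeg; case/orP=> H.
  by have := card_set_ge1 (fun i => pos G j i) H; lia.
by have := card_set_ge1 (fun i => neg G j i) H; lia.
Qed.

Lemma uarc_indeg j i : uarc G j i -> (0 < indeg G i)%N.
Proof.
rewrite /uarc /indeg; case/orP=> H.
  by have := card_set_ge1 (fun j => pos G j i) H; lia.
by have := card_set_ge1 (fun j => neg G j i) H; lia.
Qed.

Lemma par_outdeg j i : pos G j i -> neg G j i -> (2 <= outdeg G j)%N.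
Proof.
move=> Hp Hn; rewrite /outdeg.
have := card_set_ge1 (fun i => pos G j i) Hp.
have := card_set_ge1 (fun i => neg G j i) Hn; lia.
Qed.

Lemma outdeg1_uniq j u v : (outdeg G j <= 1)%N -> uarc G j u -> uarc G j v -> u = v.
Proof.
move=> Hd Hu Hv; apply/eqP; apply: contraT => uv; move: Hd; rewrite /outdeg.
move: Hu Hv; rewrite /uarc => /orP[] Hu /orP[] Hv.
- by have := card_set_ge2 (fun i => pos G j i) Hu Hv uv; lia.
- have := card_set_ge1 (fun i => pos G j i) Hu.
  have := card_set_ge1 (fun i => neg G j i) Hv; lia.
- have := card_set_ge1 (fun i => neg G j i) Hu.
  have := card_set_ge1 (fun i => pos G j i) Hv; lia.
- by have := card_set_ge2 (fun i => neg G j i) Hu Hv uv; lia.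
Qed.

Lemma indeg0 i : indeg G i = 0%N -> forall j, ~~ uarc G j i.
Proof.
move=> H j; apply/negP=> /uarc_indeg; lia.
Qed.

Lemma indeg_pos i : (0 < indeg G i)%N -> exists j, uarc G j i.
Proof.
rewrite /indeg => H.
case: (pickP (fun j => uarc G j i)) => [j Hj|H0]; first by exists j.
have E1 : [set j | pos G j i] = set0.
  by apply/setP=> j; rewrite !inE; have := H0 j; rewrite /uarc; case: (pos G j i).
have E2 : [set j | neg G j i] = set0.
  by apply/setP=> j; rewrite !inE; have := H0 j; rewrite /uarc orbC; case: (neg G j i).
by move: H; rewrite E1 E2 cards0.
Qed.

Lemma outdeg_pos j : (0 < outdeg G j)%N -> exists i, uarc G j i.
Proof.
rewrite /outdeg => H.
case: (pickP (fun i => uarc G j i)) => [i Hi|H0]; first by exists i.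
have E1 : [set i | pos G j i] = set0.
  by apply/setP=> i; rewrite !inE; have := H0 i; rewrite /uarc; case: (pos G j i).
have E2 : [set i | neg G j i] = set0.
  by apply/setP=> i; rewrite !inE; have := H0 i; rewrite /uarc orbC; case: (neg G j i).
by move: H; rewrite E1 E2 cards0.
Qed.

End Deg.


Section Kill.
Variable n : nat.
Variable G : sdigraph n.

Definition src (i : 'I_n) := [forall j, ~~ uarc G j i].
Definition blocked (i : 'I_n) := [exists j, uarc G j i && (2 <= outdeg G j)%N].
Fixpoint kb (t : nat) (i : 'I_n) : bool :=
  if t is t'.+1 then kb t' i || [exists j, uarc G j i && kb t' j]
  else src i || blocked i.
Definition Kc (i : 'I_n) := [exists r, (src r || blocked r) && connect (uarc G) r i].

Lemma kb_path p r t : kb t r -> path (uarc G) r p -> kb (t + size p) (last r p).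
Proof.
elim: p r t => [|a p IH] r t Hr /=; first by rewrite addn0.
case/andP=> Hra Hp; rewrite addnS -addSn; apply: IH => //=.
by apply/orP; right; apply/existsP; exists r; rewrite Hra.
Qed.

Lemma Kc_kb i : Kc i -> exists t, kb t i.
Proof.
case/existsP=> r /andP[Hr /connectP [p Hp ->]].
by exists (size p); rewrite -(add0n (size p)); apply: kb_path.
Qed.

Lemma all_Kc : sconnected G -> ~ signed_cycle G -> forall i, Kc i.
Proof.
move=> Hcon Hnc i0; case: (boolP (Kc i0)) => // Hi0; exfalso; apply: Hnc.
set U := [set i | ~~ Kc i].
have Hi0U : i0 \in U by rewrite inE.
have Ha : forall u, u \in U -> exists j, uarc G j u.
  move=> u; rewrite inE => Hu; case: (boolP (src u)) => Hs.
    by case/negP: Hu; apply/existsP; exists u; rewrite Hs connect0.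
  by move: Hs; rewrite /src negb_forall => /existsP [j]; rewrite negbK; exists j.
have Hb : forall u j, u \in U -> uarc G j u -> j \in U.
  move=> u j; rewrite !inE => Hu Hj; apply/negP => Kj; case/negP: Hu.
  case/existsP: Kj => r /andP[Hr Hc]; apply/existsP; exists r; rewrite Hr /=.
  exact: connect_trans Hc (connect1 Hj).
have Hc : forall u j, u \in U -> uarc G j u -> (outdeg G j <= 1)%N.
  move=> u j; rewrite !inE => Hu Hj; rewrite leqNgt; apply/negP => Hd; case/negP: Hu.
  apply/existsP; exists u; rewrite connect0 andbT; apply/orP; right.
  by apply/existsP; exists j; rewrite Hj.
pose pr u := odflt u [pick j | uarc G j u].
have Hpr : forall u, u \in U -> uarc G (pr u) u.
  move=> u Hu; rewrite /pr; case: pickP => [j //|H0].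
  by have [j Hj] := Ha u Hu; rewrite H0 in Hj.
have prU : forall u, u \in U -> pr u \in U by move=> u Hu; exact: Hb _ _ Hu (Hpr u Hu).
have prinj : {in U &, injective pr}.
  move=> u v Hu Hv E; apply: (outdeg1_uniq (j := pr u)).
  - exact: Hc _ _ Hu (Hpr u Hu).
  - exact: Hpr.
  - by rewrite E; exact: Hpr.
have prsurj : pr @: U = U.
  apply/eqP; rewrite eqEcard (card_in_imset prinj) leqnn andbT.
  by apply/subsetP=> w /imsetP [u Hu ->]; exact: prU.
have Hsucc : forall w, w \in U -> exists2 u, u \in U & uarc G w u /\ (outdeg G w <= 1)%N.
  move=> w; rewrite -{1}prsurj => /imsetP [u Hu ->]; exists u => //.
  by split; [exact: Hpr | exact: Hc _ _ Hu (Hpr u Hu)].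
have Hall : forall w, w \in U.
  move=> w; have /connectP [p Hp ->] := Hcon i0 w.
  move: Hi0U Hp; clear Hi0; elim: p i0 => [//|b p IH] a Ha' /= /andP [Hab Hp]; apply: IH Hp.
  case/orP: Hab => Hab.
    have [u Hu [Hau Hd]] := Hsucc a Ha'.
    by rewrite (outdeg1_uniq Hd Hab Hau).
  exact: Hb _ _ Ha' Hab.
pose succ w := odflt w [pick u | uarc G w u].
have Hsu : forall w, uarc G w (succ w).
  move=> w; rewrite /succ; case: pickP => [u //|H0].
  by have [u _ [Hu _]] := Hsucc w (Hall w); rewrite H0 in Hu.
have Hd1 : forall w, (outdeg G w <= 1)%N by move=> w; have [u _ [_ Hd]] := Hsucc w (Hall w).
have Hsu_uniq : forall w u, uarc G w u -> u = succ w.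
  by move=> w u H; exact: outdeg1_uniq (Hd1 w) H (Hsu w).
have prinjT : injective pr by move=> u v; apply: prinj; apply: Hall.
have [g prg gpr] := injF_bij prinjT.
have succE : forall x, succ x = g x.
  by move=> x; rewrite -{1}(gpr x); symmetry; apply: Hsu_uniq; apply: Hpr.
have succinj : injective succ.
  by move=> a b E; rewrite !succE in E; rewrite -(gpr a) -(gpr b) E.
set s := orbit succ i0.
have Hin : forall w, w \in s.
  move=> w; rewrite /s -fconnect_orbit.
  have /connectP [p Hp ->] := Hcon i0 w.
  have Gen : forall (p : seq 'I_n) a, path (fun a b => uarc G a b || uarc G b a) a p ->
      fconnect succ i0 a -> fconnect succ i0 (last a p).
    elim=> [//|b q IH] a /= /andP [Hab Hq] Hca.
  apply: IH Hq _; apply: connect_trans Hca _.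
  case/orP: Hab => Hab.
    by apply: connect1; rewrite /= (Hsu_uniq _ _ Hab).
  rewrite fconnect_sym //; apply: connect1; by rewrite /= (Hsu_uniq _ _ Hab).
  exact: Gen Hp (connect0 _ _).
split.
  exists s; split.
  - by apply/eqP => E; have := Hin i0; rewrite E.
  - apply: uniq_perm; [exact: orbit_uniq | exact: enum_uniq |].
    by move=> w; rewrite Hin mem_enum.
  - move=> j i; have /eqP <- := next_cycle (cycle_orbit succinj i0) (Hin j).
    apply/idP/idP => [/Hsu_uniq -> //|/eqP ->]; exact: Hsu.
move=> j i; apply/negP => /andP [Hp Hn]; have := par_outdeg Hp Hn; have := Hd1 j; lia.
Qed.

End Kill.

Local Open Scope ring_scope.

Section Conv.
Variable n : nat.
Variable G : sdigraph n.
Variables lo hi : 'I_n -> int.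
Variable f : ('I_n -> int) -> ('I_n -> int).
Hypothesis Hlh : forall i, lo i <= hi i.
Hypothesis HX : maps_X lo hi f.
Hypothesis Hfds : fds_on lo hi f G.

Definition upd (x : 'I_n -> int) k v := fun m => if m == k then v else x m.

Lemma noarc_incr i k : ~~ uarc G k i -> forall x, inX lo hi x -> x k < hi k ->
  f (incr x k) i = f x i.
Proof.
move=> Hk x Hx Hxk; have [Hp Hn] := Hfds k i.
move: Hk; rewrite /uarc negb_or => /andP[Hpk Hnk].
have A : ~ (f (incr x k) i - f x i > 0).
  by move=> H; move: Hpk; rewrite (proj2 Hp) //; exists x.
have B : ~ (f (incr x k) i - f x i < 0).
  by move=> H; move: Hnk; rewrite (proj2 Hn) //; exists x.
by apply/eqP; rewrite -subr_eq0; apply/eqP; move: A B; lia.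
Qed.

Hypothesis Hcard2 : forall k, hi k = lo k + 1.

Lemma noarc_upd i k : ~~ uarc G k i -> forall x, inX lo hi x ->
  forall v, lo k <= v <= hi k -> f (upd x k v) i = f x i.
Proof.
move=> Hk x Hx v Hv.
set w := upd x k (lo k).
have Hw : inX lo hi w.
  move=> m; rewrite /w /upd; case: eqP => [->|_]; last exact: Hx.
  by have := Hlh k; lia.
have E : forall a, lo k <= a <= hi k -> f (upd x k a) i = f w i.
  move=> a Ha; have := Hcard2 k => Hc.
  have [->|Ha'] : a = lo k \/ a = lo k + 1 by lia.
    by [].
  have -> : upd x k a = incr w k.
    apply: functional_extensionality => m; rewrite /incr /w /upd.
    by case: eqP => // ->; rewrite eqxx.
  apply: noarc_incr => //; rewrite /w /upd eqxx; lia.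
rewrite E // -(E (x k)) ?Hx //.
by congr (f _ i); apply: functional_extensionality => m; rewrite /upd; case: eqP => // ->.
Qed.

Lemma dep_only i x y : inX lo hi x -> inX lo hi y ->
  (forall k, uarc G k i -> x k = y k) -> f x i = f y i.
Proof.
move=> Hx Hy Hxy.
pose z (m : nat) := fun k : 'I_n => if (k < m)%N then y k else x k.
have Hz : forall m, inX lo hi (z m).
  by move=> m k; rewrite /z; case: ifP => _; [apply: Hy | apply: Hx].
have E : forall m, f (z m) i = f x i.
  elim=> [|m IH].
    by congr (f _ i); apply: functional_extensionality => k; rewrite /z.
  case: (ltnP m n) => Hm.
    pose k := Ordinal Hm.
    have -> : z m.+1 = upd (z m) k (y k).
      apply: functional_extensionality => k'; rewrite /z /upd ltnS.
      case: eqP => [->|Hne] /=; first by rewrite leqnn.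
      rewrite leq_eqVlt; case: eqP => // Hkm; case: Hne; exact: val_inj.
    case: (boolP (uarc G k i)) => Hk.
      rewrite -IH; congr (f _ i); apply: functional_extensionality => k'.
      rewrite /upd /z; case: eqP => // ->; rewrite /= ltnn; exact: (esym (Hxy _ Hk)).
    by rewrite noarc_upd // Hy.
  rewrite -IH; congr (f _ i); apply: functional_extensionality => k'.
  have H1 : (k' < m)%N := leq_trans (ltn_ord k') Hm.
  by rewrite /z H1 (ltn_trans H1 (ltnSn m)).
rewrite -(E n); congr (f _ i); apply: functional_extensionality => k.
by rewrite /z ltn_ord.
Qed.

End Conv.

Lemma cycle_not_nilp n (G : sdigraph n) lo hi f :
  signed_cycle G -> (forall i, lo i <= hi i) -> maps_X lo hi f ->
  fds_on lo hi f G -> degree_bounded lo hi G -> ~ nilpotent lo hi f.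
Proof.
move=> [[s [s0 Hperm Harc]] Hnp] Hlh HX Hfds Hdb.
have Us : uniq s by rewrite (perm_uniq Hperm) enum_uniq.
have Ins : forall j, j \in s by move=> j; rewrite (perm_mem Hperm) mem_enum.
have Hnx : forall j, uarc G j (next s j) by move=> j; rewrite Harc eqxx.
have Hout : forall j, outdeg G j = 1%N.
  move=> j; apply/eqP; rewrite eqn_leq (uarc_outdeg (Hnx j)) andbT /outdeg.
  have Hp : forall i, pos G j i -> i = next s j.
    by move=> i H; apply/eqP; rewrite -Harc /uarc H.
  have Hn : forall i, neg G j i -> i = next s j.
    by move=> i H; apply/eqP; rewrite -Harc /uarc H orbT.
  have Hnn := Hnp j (next s j).
  case Hpj: (pos G j (next s j)).
    have -> : [set i | neg G j i] = set0.
      apply/setP=> i; rewrite !inE; apply/negP=> H; move: Hnn.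
      by rewrite Hpj /= -(Hn _ H) H.
    rewrite cards0 addn0 -(cards1 (next s j)); apply: subset_leq_card.
    by apply/subsetP=> i; rewrite !inE => /Hp ->.
  have -> : [set i | pos G j i] = set0.
    by apply/setP=> i; rewrite !inE; apply/negP=> H; move: (H); rewrite (Hp _ H) Hpj.
  rewrite cards0 add0n -(cards1 (next s j)); apply: subset_leq_card.
  by apply/subsetP=> i; rewrite !inE => /Hn ->.
have Hc2 : forall k, hi k = lo k + 1.
  move=> k; have := Hdb k; rewrite Hout /= /card_X => Hle.
  have Hlt : lo k < hi k.
    have [Hp Hn] := Hfds k (next s k).
    move: (Hnx k); rewrite /uarc => /orP[/Hp|/Hn] [x [Hx Hxk _]];
      have := Hx k; lia.
  lia.
have Hinj : forall x y, inX lo hi x -> inX lo hi y -> f x = f y -> x = y.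
  move=> x y Hx Hy Hf; apply: functional_extensionality => j.
  set i := next s j.
  have Honly : forall k, uarc G k i -> k = j.
    move=> k; rewrite Harc => /eqP E; exact: (can_inj (prev_next Us) (esym E)).
  have [w [Hw Hwj Hdiff]] : exists w, [/\ inX lo hi w, w j < hi j & f (incr w j) i <> f w i].
    have [Hp Hn] := Hfds j i.
    move: (Hnx j); rewrite /uarc => /orP[/Hp|/Hn] [w [Hw Hwj Hd]];
      exists w; split => // E; move: Hd; rewrite E; lia.
  have Hwi : inX lo hi (incr w j).
    move=> m; rewrite /incr; case: eqP => [->|_]; last exact: Hw.
    by have := Hw j; lia.
  have Hcase : forall a b, inX lo hi a -> inX lo hi b -> a j = lo j -> b j = lo j + 1 ->
      f a i <> f b i.
    move=> a b Ha Hb Haj Hbj.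
    rewrite (dep_only Hlh Hfds Hc2 Ha Hw) ?(dep_only Hlh Hfds Hc2 Hb Hwi).
    - by move=> E; apply: Hdiff; rewrite E.
    - move=> k /Honly ->; rewrite Hbj /incr eqxx; have := Hw j; have := Hc2 j; lia.
    - move=> k /Honly ->; rewrite Haj; have := Hw j; have := Hc2 j; lia.
  have Hxj := Hx j; have Hyj := Hy j; have := Hc2 j => Hc.
  have [//|Hne] := eqVneq (x j) (y j); exfalso.
  have [[Ex Ey]|[Ex Ey]] : (x j = lo j /\ y j = lo j + 1) \/ (y j = lo j /\ x j = lo j + 1).
    by move: Hne => /eqP; lia.
    by apply: (Hcase x y) => //; rewrite Hf.
  by apply: (Hcase y x) => //; rewrite Hf.
move=> [k [Hk [c Hc]]].
have HitX : forall m x, inX lo hi x -> inX lo hi (iter m f x).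
  by elim=> [//|m IH] x Hx /=; apply: HX; apply: IH.
have Hitinj : forall m x y, inX lo hi x -> inX lo hi y -> iter m f x = iter m f y -> x = y.
  elim=> [//|m IH] x y Hx Hy /= E; apply: IH => //; apply: Hinj => //; exact: HitX.
case Es: s s0 => [//|j0 s'] _.
pose x0 := fun m : 'I_n => lo m.
have Hx0 : inX lo hi x0 by move=> m; rewrite /x0; have := Hlh m; lia.
have Hx1 : inX lo hi (incr x0 j0).
  move=> m; rewrite /incr /x0; case: eqP => [->|_]; [have := Hc2 j0 | have := Hc2 m]; lia.
have := Hitinj k _ _ Hx0 Hx1.
have E : iter k f x0 = iter k f (incr x0 j0).
  by apply: functional_extensionality => m; rewrite !Hc.
move=> /(_ E) /(congr1 (fun z => z j0)); rewrite /incr /x0 eqxx; lia.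
Qed.


Section Constr.
Variable n : nat.
Variable G : sdigraph n.
Hypothesis Hall : forall i, exists t, kb G t i.

Definition par (j i : 'I_n) := pos G j i && neg G j i.
Definition haspar j := [exists i, par j i].
Definition hassingle j := [exists i, uarc G j i && ~~ par j i].
Definition mm j : nat :=
  if (2 <= outdeg G j)%N then (3 + (haspar j && hassingle j))%N
  else if (0 < outdeg G j + indeg G j)%N then 2%N else 1%N.
Definition lo0 (j : 'I_n) : int := 0.
Definition hiv j : int := (mm j)%:Z - 1.
Definition tv j : int := if haspar j then 2 else 1.

Definition rk i := ex_minn (Hall i).
Definition bk i := odflt i [pick j | uarc G j i && (2 <= outdeg G j)%N].
Definition pk t i := odflt i [pick j | uarc G j i && kb G t j].
Fixpoint sigt t i : bool :=
  if t is t'.+1 then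
    (if kb G t' i then sigt t' i else (pos G (pk t' i) i == sigt t' (pk t' i)))
  else (if blocked G i then pos G (bk i) i else true).
Definition sig i := sigt (rk i) i.
Definition zv i := if sig i then 0 else tv i.
Definition zv' i := if sig i then tv i else 0.
Definition pv i j : int := if par j i then 1 else if pos G j i == sig i then hiv j else 0.
Definition trig (x : 'I_n -> int) i := [forall j, uarc G j i ==> (x j == pv i j)].
Definition F (x : 'I_n -> int) i : int :=
  if src G i then 0 else if trig x i then zv' i else zv i.

Lemma rk_kb i : kb G (rk i) i.
Proof. by rewrite /rk; case: ex_minnP. Qed.

Lemma rk_min i t : kb G t i -> (rk i <= t)%N.
Proof. by rewrite /rk; case: ex_minnP => m _ H /H. Qed.

Lemma kb_S t i : kb G t i -> kb G t.+1 i.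
Proof. by move=> H /=; rewrite H. Qed.

Lemma kb_mono t t' i : (t <= t')%N -> kb G t i -> kb G t' i.
Proof.
move=> /subnK <-; elim: (t' - t)%N => [//|d IH] H.
by rewrite addSn; apply: kb_S; apply: IH.
Qed.

Lemma sigt_stable t i : kb G t i -> sigt t i = sig i.
Proof.
move=> H; have Hr := rk_min H; rewrite -(subnK Hr) /sig.
elim: (t - rk i)%N => [//|d IH] /=.
by rewrite (kb_mono (leq_addl d (rk i)) (rk_kb i)).
Qed.

Lemma src_kb0 i : src G i -> kb G 0 i.
Proof. by move=> /= ->. Qed.

Lemma uarc_nsrc j i : uarc G j i -> ~~ src G i.
Proof. by move=> H; rewrite /src negb_forall; apply/existsP; exists j; rewrite negbK. Qed.

Lemma mm_ge2 j : (0 < outdeg G j + indeg G j)%N -> (2 <= mm j)%N.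
Proof. by rewrite /mm => H; case: ifP => _; [|rewrite H]. Qed.

Lemma hiv_ge0 j : 0 <= hiv j.
Proof. by rewrite /hiv /mm; case: ifP => _; [|case: ifP => _]; lia. Qed.

Lemma hiv_out j i : uarc G j i -> 1 <= hiv j.
Proof.
move=> H; have := mm_ge2 (j:=j); have := uarc_outdeg H; rewrite /hiv => H1 H2.
have := H2 ltac:(lia); lia.
Qed.

Lemma hiv_out2 j : (2 <= outdeg G j)%N -> 2 <= hiv j.
Proof. by rewrite /hiv /mm => ->; lia. Qed.

Lemma haspar_out j : haspar j -> (2 <= outdeg G j)%N.
Proof. by case/existsP=> i /andP [Hp Hn]; exact: par_outdeg Hp Hn. Qed.

Lemma tv_hiv j : (0 < outdeg G j + indeg G j)%N -> 1 <= tv j <= hiv j.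
Proof.
move=> H; rewrite /tv; case: (boolP (haspar j)) => Hp.
  by have := hiv_out2 (haspar_out Hp); lia.
by have := mm_ge2 H; rewrite /hiv; lia.
Qed.

Lemma F_val x i : F x i = 0 \/ F x i = tv i.
Proof. by rewrite /F /zv /zv'; case: ifP; [left|case: ifP; case: ifP; auto]. Qed.

Lemma F_inX x : inX lo0 hiv (F x).
Proof.
move=> i; rewrite /lo0; case: (boolP (src G i)) => Hs.
  by rewrite /F Hs; have := hiv_ge0 i; lia.
have [j Hj] : exists j, uarc G j i.
  by move: Hs; rewrite /src negb_forall => /existsP [j]; rewrite negbK; exists j.
have := tv_hiv (j:=i); have := uarc_indeg Hj => Hi H.
have := H ltac:(lia).
by case: (F_val x i) => ->; lia.
Qed.

Lemma trig_at x i j : trig x i -> uarc G j i -> x j = pv i j.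
Proof. by move=> /forallP /(_ j) /implyP H /H /eqP. Qed.


Lemma src_sig i : src G i -> sig i.
Proof.
move=> Hs; rewrite -(sigt_stable (src_kb0 Hs)) /=.
case: ifP => // /existsP [j /andP [Hj _]].
by move: Hs => /forallP /(_ j); rewrite Hj.
Qed.

Lemma blocked_sig i : blocked G i -> sig i = pos G (bk i) i.
Proof.
move=> Hb; have H0 : kb G 0 i by rewrite /= Hb orbT.
by rewrite -(sigt_stable H0) /= Hb.
Qed.

Lemma bk_spec i : blocked G i -> uarc G (bk i) i && (2 <= outdeg G (bk i))%N.
Proof.
move=> /existsP [j Hj]; rewrite /bk; case: pickP => [k //|H0].
by rewrite H0 in Hj.
Qed.

Lemma F_nsrc x i : ~~ src G i -> F x i = if trig x i then zv' i else zv i.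
Proof. by rewrite /F => /negbTE ->. Qed.

Lemma zv_aux (b c : bool) (h t : int) : 1 <= h -> 1 <= t ->
  (if b then 0 else t) = (if c == (c == b) then h else 0) -> False.
Proof. by case: b; case: c => /=; lia. Qed.

Lemma kill t i : kb G t i -> exists T, forall x s, (T <= s)%N -> iter s F x i = zv i.
Proof.
elim: t i => [|t IH] i /=.
  case/orP => [Hs|Hb].
    exists 1%N => x [//|s] _; rewrite iterS /F Hs /zv src_sig //.
  exists 2%N => x [//|[//|s]] _; rewrite iterS.
  have /andP [Hj Hd] := bk_spec Hb; set j := bk i in Hj Hd *.
  rewrite F_nsrc ?(uarc_nsrc Hj) //.
  case: ifP => // Ht; exfalso.
  have := trig_at Ht Hj; rewrite iterS.
  have Hv := F_val (iter s F x) j.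
  rewrite /pv (blocked_sig Hb) -/j eqxx.
  case: (boolP (par j i)) => Hp.
    have Htv : tv j = 2 by rewrite /tv; case: (boolP (haspar j)) => // /negP []; apply/existsP; exists i.
    by move: Hv; rewrite Htv; lia.
  have Hsg : hassingle j by apply/existsP; exists i; rewrite Hj Hp.
  move: Hv; rewrite /hiv /mm Hd Hsg /tv; case: (haspar j) => /=; lia.
case/orP => [Ht|/existsP [j0 Hj0]]; first exact: IH.
case: (boolP (kb G t i)) => Hti; first exact: IH.
have /andP [Hj Hkj] : uarc G (pk t i) i && kb G t (pk t i).
  by rewrite /pk; case: pickP => [k //|H0]; rewrite H0 in Hj0.
set j := pk t i in Hj Hkj.
have [T HT] := IH j Hkj.
exists T.+1 => x [//|s] Hs; rewrite iterS.
have Hnb : ~~ blocked G i.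
  by apply: contra Hti => Hb; apply: (kb_mono (leq0n t)); rewrite /= Hb orbT.
have Hd : (outdeg G j <= 1)%N.
  rewrite leqNgt; apply: contra Hnb => Hd; apply/existsP; exists j; by rewrite Hj.
have Hnp : ~~ par j i by apply/negP => /andP [Hp Hn]; have := par_outdeg Hp Hn; lia.
have Hsig : sig i = (pos G j i == sig j).
  have Hrk : rk i = t.+1.
    apply/eqP; rewrite eqn_leq rk_min /=; last by rewrite (negbTE Hti) /=; apply/existsP; exists j0.
    rewrite ltnNge; apply/negP => Hle; case/negP: Hti; exact: kb_mono Hle (rk_kb i).
  by rewrite /sig Hrk /= (negbTE Hti) -/j (sigt_stable Hkj).
have Hnsrc : ~~ src G i.
  by apply: contra Hti => Hs'; apply: (kb_mono (leq0n t)); rewrite /= Hs'.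
rewrite F_nsrc //; case: ifP => // Htr; exfalso.
have := trig_at Htr Hj; rewrite (HT x s Hs) /pv (negbTE Hnp) Hsig.
have H1 := hiv_out Hj.
have Ht1 := tv_hiv (ltn_addr (indeg G j) (uarc_outdeg Hj)).
rewrite /zv; apply: zv_aux => //; case/andP: Ht1 => //.

Qed.

Lemma uniform_T (P : 'I_n -> nat -> Prop) :
  (forall i, exists T, forall s, (T <= s)%N -> P i s) ->
  exists T, forall i s, (T <= s)%N -> P i s.
Proof.
move=> H.
suff [T HT] : exists T, forall i, i \in enum 'I_n -> forall s, (T <= s)%N -> P i s.
  by exists T => i; apply: HT; rewrite mem_enum.
elim: (enum 'I_n) => [|a l [T HT]]; first by exists 0%N.
have [Ta HTa] := H a.
exists (maxn T Ta) => i; rewrite inE => /orP [/eqP ->|Hi] s Hs.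
  by apply: HTa; apply: leq_trans Hs; apply: leq_maxr.
by apply: HT => //; apply: leq_trans Hs; apply: leq_maxl.
Qed.

Lemma F_nilp : nilpotent lo0 hiv F.
Proof.
have [T HT] := uniform_T (P := fun i s => forall x, iter s F x i = zv i)
  (fun i => match Hall i with ex_intro t Ht =>
     match kill Ht with ex_intro T HT => ex_intro _ T (fun s Hs x => HT x s Hs) end end).
exists T.+1; split => //; exists zv => x _ i; apply: HT; exact: leqnSn.
Qed.

Lemma pv_range j i : uarc G j i -> 0 <= pv i j <= hiv j.
Proof.
move=> Hj; have := hiv_out Hj; rewrite /pv; case: ifP => [/andP [Hp Hn]|_].
  by have := hiv_out2 (par_outdeg Hp Hn); lia.
by case: ifP => _; lia.
Qed.

Lemma pos_char j i : uarc G j i ->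
  pos G j i <-> (sig i /\ 0 < pv i j) \/ (~~ sig i /\ pv i j < hiv j).
Proof.
move=> Hj; have H1 := hiv_out Hj; rewrite /pv /par.
case Hp: (pos G j i); case Hn: (neg G j i) => /=.
- have := hiv_out2 (par_outdeg Hp Hn); case: (sig i) => /= H2; split => // _; lia.
- case: (sig i) => /=; split => // _; lia.
- case: (sig i) => /=; split => // -[[]|[]] //; lia.
- by move: Hj; rewrite /uarc Hp Hn.
Qed.

Lemma neg_char j i : uarc G j i ->
  neg G j i <-> (sig i /\ pv i j < hiv j) \/ (~~ sig i /\ 0 < pv i j).
Proof.
move=> Hj; have H1 := hiv_out Hj; rewrite /pv /par.
case Hp: (pos G j i); case Hn: (neg G j i) => /=.
- have := hiv_out2 (par_outdeg Hp Hn); case: (sig i) => /= H2; split => // _; lia.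
- case: (sig i) => /=; split => // -[[]|[]] //; lia.
- case: (sig i) => /=; split => // _; lia.
- by move: Hj; rewrite /uarc Hp Hn.
Qed.

Lemma trig_noarc x j i : ~~ uarc G j i -> trig (incr x j) i = trig x i.
Proof.
move=> H; apply: eq_forallb => k; case: (eqVneq k j) => [->|Hne].
  by rewrite (negbTE H).
by rewrite /incr (negbTE Hne).
Qed.

Lemma trig_one y j i : uarc G j i ->
  (forall k, k != j -> uarc G k i -> y k = pv i k) -> trig y i = (y j == pv i j).
Proof.
move=> Hj Hy; apply/forallP/idP => [/(_ j)|H k]; first by rewrite Hj.
apply/implyP => Hk; case: (eqVneq k j) => [->//|Hne]; by rewrite Hy.
Qed.

Definition xa (a : int) j i : 'I_n -> int :=
  fun k => if k == j then a else if uarc G k i then pv i k else 0.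

Lemma xa_inX a j i : 0 <= a <= hiv j -> inX lo0 hiv (xa a j i).
Proof.
move=> Ha k; rewrite /xa /lo0; case: eqP => [->//|_].
by case: ifP => [/pv_range //|_]; have := hiv_ge0 k; lia.
Qed.

Lemma D_eq y j i : ~~ src G i ->
  F (incr y j) i - F y i =
  (if trig (incr y j) i then zv' i else zv i) - (if trig y i then zv' i else zv i).
Proof. by move=> Hs; rewrite !F_nsrc. Qed.

Lemma tv_i j i : uarc G j i -> 1 <= tv i.
Proof. by move=> Hj; have := tv_hiv (j := i); have := uarc_indeg Hj => H1 H2; have := H2 ltac:(lia); lia. Qed.

Lemma exists_D j i : uarc G j i ->
  ((exists x, [/\ inX lo0 hiv x, x j < hiv j & F (incr x j) i - F x i > 0]) <->
   (sig i /\ 0 < pv i j) \/ (~~ sig i /\ pv i j < hiv j)) /\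
  ((exists x, [/\ inX lo0 hiv x, x j < hiv j & F (incr x j) i - F x i < 0]) <->
   (sig i /\ pv i j < hiv j) \/ (~~ sig i /\ 0 < pv i j)).
Proof.
move=> Hj; have Hs := uarc_nsrc Hj; have Htv := tv_i Hj; have Hr := pv_range Hj.
have Hxa1 : forall a, trig (incr (xa a j i) j) i = (a + 1 == pv i j).
  move=> a; rewrite (trig_one Hj) /incr /xa ?eqxx // => k /negbTE -> ->; by [].
have Hxa0 : forall a, trig (xa a j i) i = (a == pv i j).
  move=> a; rewrite (trig_one Hj) /xa ?eqxx // => k /negbTE -> ->; by [].
have Hback : forall x, inX lo0 hiv x -> x j < hiv j ->
   (trig (incr x j) i -> x j + 1 = pv i j) /\ (trig x i -> x j = pv i j).
  move=> x Hx Hxj; split => Ht; have := trig_at Ht Hj; rewrite /incr ?eqxx //.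
split; split.
- move=> [x [Hx Hxj HD]]; move: HD; rewrite D_eq //; have [B1 B0] := Hback x Hx Hxj.
  have := Hx j; rewrite /lo0 /zv /zv' => Hxr.
  move: B1 B0; case: (trig (incr x j) i); case: (trig x i); case: (sig i) => /= B1 B0;
    try (have := B1 isT); try (have := B0 isT); lia.
- case=> [[Hsg H]|[Hsg H]].
  + exists (xa (pv i j - 1) j i); split.
    * by apply: xa_inX; lia.
    * by rewrite /xa eqxx; lia.
    * rewrite D_eq // Hxa1 Hxa0 /zv /zv' Hsg.
      have -> : (pv i j - 1 + 1 == pv i j) by apply/eqP; lia.
      have -> : (pv i j - 1 == pv i j) = false by apply/eqP; lia.
      lia.
  + exists (xa (pv i j) j i); split.
    * by apply: xa_inX; lia.
    * by rewrite /xa eqxx.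
    * rewrite D_eq // Hxa1 Hxa0 /zv /zv' (negbTE Hsg) eqxx.
      have -> : (pv i j + 1 == pv i j) = false by apply/eqP; lia.
      lia.
- move=> [x [Hx Hxj HD]]; move: HD; rewrite D_eq //; have [B1 B0] := Hback x Hx Hxj.
  have := Hx j; rewrite /lo0 /zv /zv' => Hxr.
  move: B1 B0; case: (trig (incr x j) i); case: (trig x i); case: (sig i) => /= B1 B0;
    try (have := B1 isT); try (have := B0 isT); lia.
- case=> [[Hsg H]|[Hsg H]].
  + exists (xa (pv i j) j i); split.
    * by apply: xa_inX; lia.
    * by rewrite /xa eqxx.
    * rewrite D_eq // Hxa1 Hxa0 /zv /zv' Hsg eqxx.
      have -> : (pv i j + 1 == pv i j) = false by apply/eqP; lia.
      lia.
  + exists (xa (pv i j - 1) j i); split.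
    * by apply: xa_inX; lia.
    * by rewrite /xa eqxx; lia.
    * rewrite D_eq // Hxa1 Hxa0 /zv /zv' (negbTE Hsg).
      have -> : (pv i j - 1 + 1 == pv i j) by apply/eqP; lia.
      have -> : (pv i j - 1 == pv i j) = false by apply/eqP; lia.
      lia.
Qed.

Lemma F_fds : fds_on lo0 hiv F G.
Proof.
move=> j i; case: (boolP (uarc G j i)) => Hj.
  have [D1 D2] := exists_D Hj.
  split; [rewrite D1; exact: pos_char | rewrite D2; exact: neg_char].
have E : forall x, F (incr x j) i = F x i.
  by move=> x; rewrite /F trig_noarc.
move: Hj; rewrite /uarc negb_or => /andP [/negbTE Hp /negbTE Hn].
rewrite Hp Hn; split; split => // [[x [_ _]]]; rewrite E; lia.
Qed.

Lemma hassingle3 j : haspar j -> hassingle j -> (3 <= outdeg G j)%N.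
Proof.
case/existsP => a /andP [Hpa Hna] /existsP [b /andP [Hb Hnp]].
have Hab : a != b by apply: contraNneq Hnp => <-; rewrite /par Hpa Hna.
rewrite /outdeg; move: Hb Hnp; rewrite /uarc /par => /orP [] H _.
- have := card_set_ge2 (P := fun i => pos G j i) Hpa H Hab.
  have := card_set_ge1 (P := fun i => neg G j i) Hna; lia.
- have := card_set_ge2 (P := fun i => neg G j i) Hna H Hab.
  have := card_set_ge1 (P := fun i => pos G j i) Hpa; lia.
Qed.

Lemma F_db : degree_bounded lo0 hiv G.
Proof.
move=> i; rewrite /card_X /hiv /lo0 /mm.
case: (boolP (2 <= outdeg G i)%N) => H2.
  have -> : (outdeg G i == 0%N) = false by apply/eqP; lia.
  case: (boolP (haspar i && hassingle i)) => /= [/andP [A B]|_].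
    by have := hassingle3 A B; lia.
  lia.
case: (boolP (0 < outdeg G i + indeg G i)%N) => H0.
  case: ifP => H; first by move: H => /andP [/eqP A B]; lia.
  move: H => /negbT; rewrite negb_and => /orP [A|A]; lia.
have -> : (0 < indeg G i)%N = false by lia.
rewrite andbF; lia.
Qed.

End Constr.

Theorem corollary4 (n : nat) (G : sdigraph n) :
  sconnected G ->
  ((exists (lo hi : 'I_n -> int) (f : ('I_n -> int) -> ('I_n -> int)),
      [/\ (forall i, lo i <= hi i), maps_X lo hi f, fds_on lo hi f G,
          degree_bounded lo hi G & nilpotent lo hi f])
   <-> ~ signed_cycle G).
Proof.
move=> Hcon; split.
  move=> [lo [hi [f [Hlh HX Hfds Hdb Hnil]]]] Hcyc.
  exact: (cycle_not_nilp Hcyc Hlh HX Hfds Hdb Hnil).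
move=> Hnc.
have Hall : forall i, exists t, kb G t i := fun i => Kc_kb (all_Kc Hcon Hnc i).
exists (@lo0 n), (hiv G), (F Hall); split.
- move=> i; exact: hiv_ge0.
- move=> x _; exact: F_inX.
- exact: F_fds.
- exact: F_db.
- exact: F_nilp.
Qed.
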